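(* Let \[ G=\begin{pmatrix}a&b\\ c&d\end{pmatrix},\qquad A=\begin{pmatrix}\alpha&\beta\\ \beta&\gamma\end{pmatrix} \quad(\alpha>0,\ \delta:=\det A=\alpha\gamma-\beta^{2}>0). \] Then there exists a symmetric matrix $S=\begin{pmatrix}s_{11}& s_{12}\\ s_{12}& s_{22}\end{pmatrix}$ satisfying \[ SG+G^TS=2SAS\quad \text{and}\quad \mathrm{trace}(G-AS)=0, \] given as follows: \begin{itemize} \item[(i)] If $\gamma b -\alpha c + \beta(a-d) =0$, then $S = A^{-1}G$, in particular \[ s_{11} = \frac{\gamma a - \beta c}{\alpha\gamma - \beta^2}, \qquad s_{12} = \frac{\gamma b - \beta d}{\alpha\gamma - \beta^2}, \qquad s_{22} = \frac{\alpha d - \beta b}{\alpha\gamma - \beta^2}. \] \item[(ii)] If $a+d=0$, then $S=0$. \item[(iii)] If $a+d \neq 0$ and $\gamma b- \alpha c + \beta(a-d) \neq 0$, then \begin{align*} s_{11} &= \frac{a+d}{ (\alpha \gamma-\beta^2) (a+d)^2 +\big( \gamma b - \alpha c + \beta(a-d)\big)^2} \Big( \gamma a(a+d) + \alpha c^2 - \gamma bc - 2\beta ac \Big), \\ s_{12} &= \frac{a+d}{ (\alpha \gamma-\beta^2) (a+d)^2 +\big( \gamma b - \alpha c + \beta(a-d)\big)^2} \Big( \alpha cd + \gamma ab - 2\beta ad \Big), \\ s_{22} &= \frac{a+d}{ (\alpha \gamma-\beta^2) (a+d)^2 +\big(\gamma b - \alpha c + \beta(a-d)\big)^2} \Big(\alpha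 d(a+d) + \gamma b^2 - \alpha bc - 2\beta bd \Big). \end{align*} \end{itemize}
   Context: All entries are real; $d=2$ dimension is implicit (here $d$ also denotes the matrix entry $g_{22}$). *)

(* Defs.v *)
From mathcomp Require Import all_boot all_order all_algebra.
Set Implicit Arguments. Unset Strict Implicit. Unset Printing Implicit Defensive.
Import Order.TTheory GRing.Theory Num.Theory.
Local Open Scope ring_scope.

Definition mx2 (R : nzRingType) (x11 x12 x21 x22 : R) : 'M[R]_2 :=
  \matrix_(i < 2, j < 2)
    (if i == ord0 then (if j == ord0 then x11 else x12)
     else (if j == ord0 then x21 else x22)).

Definition solves (R : comNzRingType) (S G A : 'M[R]_2) : Prop :=
  S *m G + G^T *m S = 2%:R *: (S *m A *m S) /\ \tr (G - A *m S) = 0.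

(* Main.v *)
Require Import Defs.
From mathcomp Require Import all_boot all_order all_algebra.
From mathcomp Require Import ring lra.
Import Order.TTheory GRing.Theory Num.Theory.
Local Open Scope ring_scope.

Section M.
Variable R : comNzRingType.
Implicit Types x y : R.

Lemma mx2E (M : 'M[R]_2) : M = mx2 (M 0 0) (M 0 1) (M 1 0) (M 1 1).
Proof. by apply/matrixP => i j; rewrite !mxE; case: i => [[|[|]]] //= ?; case: j => [[|[|]]] //= ?;
  congr (M _ _); apply: val_inj. Qed.

Lemma mx2_mul x11 x12 x21 x22 y11 y12 y21 y22 :
  mx2 x11 x12 x21 x22 *m mx2 y11 y12 y21 y22 =
  mx2 (x11*y11 + x12*y21) (x11*y12+x12*y22) (x21*y11+x22*y21) (x21*y12+x22*y22).
Proof.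
apply/matrixP => i j; rewrite !mxE !big_ord_recr big_ord0 /= add0r !mxE.
by case: i => [[|[|]]] //= ?; case: j => [[|[|]]] //= ?.
Qed.

Lemma mx2_tr x11 x12 x21 x22 : (mx2 x11 x12 x21 x22)^T = mx2 x11 x21 x12 x22.
Proof. by apply/matrixP => i j; rewrite !mxE; case: i => [[|[|]]] //= ?; case: j => [[|[|]]] //= ?. Qed.

Lemma mx2_add x11 x12 x21 x22 y11 y12 y21 y22 :
  mx2 x11 x12 x21 x22 + mx2 y11 y12 y21 y22 = mx2 (x11+y11) (x12+y12) (x21+y21) (x22+y22).
Proof. by apply/matrixP => i j; rewrite !mxE; case: i => [[|[|]]] //= ?; case: j => [[|[|]]] //= ?. Qed.

Lemma mx2_opp x11 x12 x21 x22 : - mx2 x11 x12 x21 x22 = mx2 (-x11) (-x12) (-x21) (-x22).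
Proof. by apply/matrixP => i j; rewrite !mxE; case: i => [[|[|]]] //= ?; case: j => [[|[|]]] //= ?. Qed.

Lemma mx2_scale k x11 x12 x21 x22 : k *: mx2 x11 x12 x21 x22 = mx2 (k*x11) (k*x12) (k*x21) (k*x22).
Proof. by apply/matrixP => i j; rewrite !mxE; case: i => [[|[|]]] //= ?; case: j => [[|[|]]] //= ?. Qed.

Lemma mx2_0 : (0 : 'M[R]_2) = @mx2 R 0 0 0 0.
Proof. by apply/matrixP => i j; rewrite !mxE; case: i => [[|[|]]] //= ?; case: j => [[|[|]]] //= ?. Qed.

Lemma mx2_1 : (1%:M : 'M[R]_2) = @mx2 R 1 0 0 1.
Proof. by apply/matrixP => i j; rewrite !mxE; case: i => [[|[|]]] //= ?; case: j => [[|[|]]] //= ?. Qed.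

Lemma mx2_tr2 x11 x12 x21 x22 : \tr (mx2 x11 x12 x21 x22) = x11 + x22.
Proof. by rewrite /mxtrace !big_ord_recr big_ord0 /= add0r !mxE. Qed.

Lemma solvesE (s11 s12 s21 s22 g11 g12 g21 g22 a11 a12 a21 a22 : R) :
  let S := mx2 s11 s12 s21 s22 in let G := mx2 g11 g12 g21 g22 in
  let A := mx2 a11 a12 a21 a22 in
  let P := S *m A *m S in
  S *m G + G^T *m S = mx2 (2%:R * P 0 0) (2%:R * P 0 1) (2%:R * P 1 0) (2%:R * P 1 1) ->
  \tr (G - A *m S) = 0 -> solves S G A.
Proof.
move=> S G A P h1 h2; split => //; rewrite h1 (mx2E (S *m A *m S)) mx2_scale.
by [].
Qed.
End M.

Theorem theorem5p5 (R : realFieldType) (a b c d alpha beta gamma : R) :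
  0 < alpha -> 0 < alpha * gamma - beta ^+ 2 ->
  let G := mx2 a b c d in
  let A := mx2 alpha beta beta gamma in
  let delta := alpha * gamma - beta ^+ 2 in
  let k := gamma * b - alpha * c + beta * (a - d) in
  (exists S : 'M[R]_2, S^T = S /\ solves S G A) /\
  (k = 0 ->
     let S := invmx A *m G in
     S = mx2 ((gamma * a - beta * c) / delta) ((gamma * b - beta * d) / delta)
             ((gamma * b - beta * d) / delta) ((alpha * d - beta * b) / delta)
     /\ S^T = S /\ solves S G A) /\
  (a + d = 0 -> solves 0 G A) /\
  (a + d != 0 -> k != 0 ->
     let f := (a + d) / (delta * (a + d) ^+ 2 + k ^+ 2) in
     let s11 := f * (gamma * a * (a + d) + alpha * c ^+ 2 - gamma * b * c
                     - 2%:R * beta * a * c) in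
     let s12 := f * (alpha * c * d + gamma * a * b - 2%:R * beta * a * d) in
     let s22 := f * (alpha * d * (a + d) + gamma * b ^+ 2 - alpha * b * c
                     - 2%:R * beta * b * d) in
     solves (mx2 s11 s12 s12 s22) G A).
Proof.
move=> ha hd G A delta k.
have dn0 : alpha * gamma - beta ^+ 2 != 0 by rewrite gt_eqF.
have an0 : alpha != 0 by rewrite gt_eqF.
have Hi : k = 0 -> let S := invmx A *m G in
     S = mx2 ((gamma * a - beta * c) / delta) ((gamma * b - beta * d) / delta)
             ((gamma * b - beta * d) / delta) ((alpha * d - beta * b) / delta)
     /\ S^T = S /\ solves S G A.
  move=> hk S.
  have hc : c = (gamma * b + beta * (a - d)) / alpha.
    apply: (mulIf an0); rewrite divfK //.
    by rewrite -[LHS]addr0 -hk /k; ring.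
  set B := mx2 (gamma / delta) (- beta / delta) (- beta / delta) (alpha / delta).
  have BA : B *m A = 1%:M.
    rewrite /B /A mx2_mul mx2_1 /delta.
    by congr mx2; field.
  have uA : A \in unitmx by case: (mulmx1_unit BA).
  have iA : invmx A = B.
    by rewrite -[invmx A]mulmx1 -(mulmx1C BA) mulmxA mulVmx // mul1mx.
  have SE : S = mx2 ((gamma * a - beta * c) / delta) ((gamma * b - beta * d) / delta)
             ((gamma * b - beta * d) / delta) ((alpha * d - beta * b) / delta).
    rewrite /S iA /B /G mx2_mul /delta.
    by congr mx2; rewrite ?hc; field; rewrite ?an0 ?dn0.
  split => //; split; first by rewrite SE mx2_tr.
  rewrite SE; apply: solvesE => /=;
  rewrite !(mx2_mul, mx2_tr, mx2_add, mx2_opp, mx2_tr2, mxE) /= /delta.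
    by congr mx2; rewrite ?hc; field; rewrite ?an0 ?dn0.
  by rewrite ?hc; field; rewrite ?an0 ?dn0.
have Hiii : (a + d != 0 -> k != 0 ->
     let f := (a + d) / (delta * (a + d) ^+ 2 + k ^+ 2) in
     let s11 := f * (gamma * a * (a + d) + alpha * c ^+ 2 - gamma * b * c
                     - 2%:R * beta * a * c) in
     let s12 := f * (alpha * c * d + gamma * a * b - 2%:R * beta * a * d) in
     let s22 := f * (alpha * d * (a + d) + gamma * b ^+ 2 - alpha * b * c
                     - 2%:R * beta * b * d) in
     solves (mx2 s11 s12 s12 s22) G A).
  move=> had hk f s11 s12 s22.
  have Dn0 : (alpha * gamma - beta ^+ 2) * (a + d) ^+ 2 +
     (gamma * b - alpha * c + beta * (a - d)) ^+ 2 != 0.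
    by rewrite gt_eqF // ltr_pwDl ?sqr_ge0 // mulr_gt0 // lt_def sqrf_eq0 had sqr_ge0.
  apply: solvesE => /=; rewrite /s11 /s12 /s22 /f /delta /k
    !(mx2_mul, mx2_tr, mx2_add, mx2_opp, mx2_tr2, mxE) /=.
    by congr mx2; field; rewrite ?Dn0.
  by field; rewrite ?Dn0.
split.
  have [hk|hk] := eqVneq k 0.
    by have [_ [h1 h2]] := Hi hk; exists (invmx A *m G).
  have [had|had] := eqVneq (a + d) 0.
    exists 0; split; first by rewrite trmx0.
    split; first by rewrite !(mulmx0, mul0mx) addr0 scaler0.
    by rewrite mulmx0 subr0 /G mx2_tr2.
  move: (Hiii had hk) => /= H; eexists; split; last exact: H.
  by rewrite mx2_tr.
split => //.
split.
  move=> had; split; first by rewrite !(mulmx0, mul0mx) addr0 scaler0.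
  by rewrite mulmx0 subr0 /G mx2_tr2.
exact: Hiii.
Qed.
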